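(* Let $\mathbf A$ be an integral interior $r\ell u$-groupoid and $\mathbf B$ a finite partial subalgebra of $\mathbf A$. Then the algebra $\mathbf F^+_{\mathbf A,\mathbf B}$ is finite.
   Context: An $r\ell u$-groupoid is an algebra $(A,\wedge,\vee,\cdot,\backslash,/,1)$ with $(A,\wedge,\vee)$ a lattice (order $\le$), $(A,\cdot,1)$ a unital groupoid (binary operation, not necessarily associative, with two-sided unit $1$), and $x\cdot y\le z\iff y\le x\backslash z\iff x\le z/y$. An interior $r\ell u$-groupoid has in addition a unary $!$ with $1\le !1$, $!x\cdot!y\le !(x\cdot y)$, $!x\le x$, $!x\le !!x$, $x\le y\Rightarrow !x\le !y$; integral means $x\le 1$ for all $x$. A partial subalgebra $\mathbf B$ of $\mathbf A$ is a subset $B\subseteq A$ with $f^{\mathbf B}(\vec b)=f^{\mathbf A}(\vec b)$ if this lies in $B$, undefined otherwise. Enriched frames. An enriched $ru$-frame is $\mathbf F=(G,T,N,K)$ where $(G,\cdot,\varepsilon)$ is a unital groupoid, $T$ a set, $N\subseteq G\times T$ a nuclear relation (for all $x,y\in G$, $z\in T$ there exist $x\backslash\!\!\backslash z,\ z/\!\!/y\in T$ with $x\cdot y\,N\,z\iff y\,N\,x\backslash\!\!\backslash z\iff x\,N\,z/\!\!/y$), and $K$ a sub-unital-groupoid of $G$. For $X\subseteq G$, $Y\subseteq T$: $X^{\rhd}=\{t\in T\mid \forall x\in X\,(x N t)\}$, $Y^{\lhd}=\{g\in G\mid\forall y\in Y\,(g N y)\}$, $\gamma_N(X)=X^{\rhd\lhd}$;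 $X$ is closed if $\gamma_N(X)=X$. $\mathbf F^+$ is the algebra whose universe is the set of closed sets, with $X\wedge Y=X\cap Y$, $X\vee Y=\gamma_N(X\cup Y)$, $X\cdot Y=\gamma_N(X\circ Y)$ where $X\circ Y=\{x\cdot y\mid x\in X,y\in Y\}$, $X\backslash Y=\{z\in G\mid X\circ\{z\}\subseteq Y\}$, $Y/X=\{z\in G\mid \{z\}\circ X\subseteq Y\}$, $!X=\gamma_N(X\cap K)$, unit $\gamma_N(\{\varepsilon\})$. The frame $\mathbf F_{\mathbf A,\mathbf B}=(G_B,T_B,N_B,K_B)$: $G_B$ is the sub-unital-groupoid of $(A,\cdot,1)$ generated by $B$; $U_{G_B}$ is the set of unary linear polynomials over $G_B$, i.e. maps $G_B\to G_B$ given by a groupoid term in which one variable occurs exactly once and all other leaves are elements of $G_B$ (including the identity map $\mathrm{id}$); $T_B=U_{G_B}\times B$; $x\,N_B\,(u,b)$ iff $u(x)\le^{\mathbf A}b$; $K_B$ is the sub-unital-groupoid of $(A,\cdot,1)$ generated by $\{!^{\mathbf A}b\mid b\in B,\ !^{\mathbf A}b\in B\}$. ($N_B$ is nuclear with $x\backslash\!\!\backslash(u,b)=(u(x\cdot\_),b)$ and $(u,b)/\!\!/y=(u(\_\cdot y),b)$.) *)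

(* Defs.v *)
From Stdlib Require Import List.
Set Implicit Arguments.

Definition rle {A : Type} (meet : A -> A -> A) (x y : A) : Prop := meet x y = x.

Record is_interior_rlu_groupoid {A : Type}
  (meet join mul ldiv rdiv : A -> A -> A) (one : A) (bang : A -> A) : Prop := {
  meet_comm : forall x y, meet x y = meet y x;
  meet_assoc : forall x y z, meet x (meet y z) = meet (meet x y) z;
  join_comm : forall x y, join x y = join y x;
  join_assoc : forall x y z, join x (join y z) = join (join x y) z;
  absorb_mj : forall x y, meet x (join x y) = x;
  absorb_jm : forall x y, join x (meet x y) = x;
  mul_one_l : forall x, mul one x = x;
  mul_one_r : forall x, mul x one = x;
  resid_ldiv : forall x y z, rle meet (mul x y) z <-> rle meet y (ldiv x z);
  resid_rdiv : forall x y z, rle meet (mul x y) z <-> rle meet x (rdiv z y);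
  bang_one : rle meet one (bang one);
  bang_mul : forall x y, rle meet (mul (bang x) (bang y)) (bang (mul x y));
  bang_deflat : forall x, rle meet (bang x) x;
  bang_idem : forall x, rle meet (bang x) (bang (bang x));
  bang_mono : forall x y, rle meet x y -> rle meet (bang x) (bang y)
}.

Definition integral {A : Type} (meet : A -> A -> A) (one : A) : Prop :=
  forall x, rle meet x one.

(** A finite subset (a partial subalgebra is determined by its underlying subset) *)
Definition finite_set {A : Type} (B : A -> Prop) : Prop :=
  exists l : list A, forall x, B x <-> In x l.

Definition rhd {G T : Type} (TT : T -> Prop) (N : G -> T -> Prop) (X : G -> Prop)
  : T -> Prop := fun t => TT t /\ forall x, X x -> N x t.
Definition lhd {G T : Type} (GG : G -> Prop) (N : G -> T -> Prop) (Y : T -> Prop)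
  : G -> Prop := fun g => GG g /\ forall y, Y y -> N g y.
Definition gammaN {G T : Type} (GG : G -> Prop) (TT : T -> Prop) (N : G -> T -> Prop)
  (X : G -> Prop) : G -> Prop := lhd GG N (rhd TT N X).

Definition closed_set {G T : Type} (GG : G -> Prop) (TT : T -> Prop) (N : G -> T -> Prop)
  (X : G -> Prop) : Prop :=
  (forall x, X x -> GG x) /\ (forall x, gammaN GG TT N X x <-> X x).

Definition finitely_many_closed {G T : Type} (GG : G -> Prop) (TT : T -> Prop)
  (N : G -> T -> Prop) : Prop :=
  exists l : list (G -> Prop),
    forall X, closed_set GG TT N X -> exists Y, In Y l /\ forall x, X x <-> Y x.

Inductive gen_subgroupoid {A : Type} (mul : A -> A -> A) (one : A) (B : A -> Prop)
  : A -> Prop :=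
| gsg_base : forall b, B b -> gen_subgroupoid mul one B b
| gsg_one : gen_subgroupoid mul one B one
| gsg_mul : forall x y, gen_subgroupoid mul one B x -> gen_subgroupoid mul one B y ->
            gen_subgroupoid mul one B (mul x y).

(** A groupoid term in which the variable
    occurs exactly once is (up to evaluating its closed subterms, which lie in
    G_B) a hole, or c * p, or p * c with p linear and c a constant. *)
Inductive lpoly (A : Type) : Type :=
| LHole : lpoly A
| LMulL : A -> lpoly A -> lpoly A
| LMulR : lpoly A -> A -> lpoly A.

Fixpoint lp_eval {A : Type} (mul : A -> A -> A) (p : lpoly A) (x : A) : A :=
  match p with
  | LHole _ => x
  | LMulL c q => mul c (lp_eval mul q x)
  | LMulR q c => mul (lp_eval mul q x) c
  end.

Fixpoint lp_over {A : Type} (GG : A -> Prop) (p : lpoly A) : Prop :=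
  match p with
  | LHole _ => True
  | LMulL c q => GG c /\ lp_over GG q
  | LMulR q c => lp_over GG q /\ GG c
  end.

Definition G_B {A : Type} (mul : A -> A -> A) (one : A) (B : A -> Prop) : A -> Prop :=
  gen_subgroupoid mul one B.

Definition T_B {A : Type} (mul : A -> A -> A) (one : A) (B : A -> Prop)
  : lpoly A * A -> Prop :=
  fun ub => lp_over (G_B mul one B) (fst ub) /\ B (snd ub).

Definition N_B {A : Type} (meet mul : A -> A -> A) (x : A) (ub : lpoly A * A) : Prop :=
  rle meet (lp_eval mul (fst ub) x) (snd ub).

(** K_B (part of the frame; not needed for the universe of F^+) *)
Definition K_B {A : Type} (mul : A -> A -> A) (one : A) (bang : A -> A) (B : A -> Prop)
  : A -> Prop :=
  gen_subgroupoid mul one (fun a => exists b, B b /\ bang b = a /\ B (bang b)).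

(** The algebra F^+_{A,B} is finite: its universe (the N_B-closed subsets of G_B)
    is finite. *)
Definition FplusAB_finite {A : Type} (meet mul : A -> A -> A) (one : A) (B : A -> Prop)
  : Prop :=
  finitely_many_closed (G_B mul one B) (T_B mul one B) (N_B meet mul).

(* Main.v *)
Require Import Defs.
From Stdlib Require Import List.
From Stdlib Require Import List Lia Classical ClassicalEpsilon.
Import ListNotations.
Set Implicit Arguments.

Inductive tree (A : Type) : Type :=
| Lf : A -> tree A
| Nd : tree A -> tree A -> tree A.
Arguments Lf {A} _.
Arguments Nd {A} _ _.

Inductive emb {A : Type} : tree A -> tree A -> Prop :=
| e_lf : forall a, emb (Lf a) (Lf a)
| e_l : forall s t1 t2, emb s t1 -> emb s (Nd t1 t2)
| e_r : forall s t1 t2, emb s t2 -> emb s (Nd t1 t2)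
| e_nd : forall s1 s2 t1 t2, emb s1 t1 -> emb s2 t2 -> emb (Nd s1 s2) (Nd t1 t2).

Lemma emb_refl {A} (t : tree A) : emb t t.
Proof. induction t; [apply e_lf|apply e_nd; auto]. Qed.

Lemma emb_Nd_inv {A} (m t1 t2 : tree A) :
  emb m (Nd t1 t2) <-> emb m t1 \/ emb m t2 \/
    exists m1 m2, m = Nd m1 m2 /\ emb m1 t1 /\ emb m2 t2.
Proof.
  split.
  - intro H; inversion H; subst; eauto 10.
  - intros [H|[H|[m1 [m2 [-> [H1 H2]]]]]]; [apply e_l|apply e_r|apply e_nd]; auto.
Qed.

Lemma emb_trans {A} (t u : tree A) : emb t u -> forall x, emb x t -> emb x u.
Proof.
  induction 1; intros x Hs.
  - exact Hs.
  - apply e_l; auto.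
  - apply e_r; auto.
  - apply emb_Nd_inv in Hs as [Q|[Q|[m1 [m2 [-> [H1q H2q]]]]]].
    + apply e_l; auto.
    + apply e_r; auto.
    + apply e_nd; auto.
Qed.

Fixpoint lab {A} (Lab : list A) (t : tree A) : Prop :=
  match t with Lf a => In a Lab | Nd s u => lab Lab s /\ lab Lab u end.

Fixpoint size {A} (t : tree A) : nat :=
  match t with Lf _ => 1 | Nd s u => S (size s + size u) end.

Definition good {A} (f : nat -> tree A) := exists i j, i < j /\ emb (f i) (f j).
Definition adm {A} (Lab : list A) (f : nat -> tree A) := forall n, lab Lab (f n).

Lemma min_nat (P : nat -> Prop) : (exists n, P n) -> exists n, P n /\ forall m, P m -> n <= m.
Proof.
  intros [n Hn]. revert Hn. induction n as [n IH] using (well_founded_induction Wf_nat.lt_wf).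
  intros Hn. destruct (classic (exists m, P m /\ m < n)) as [[m [Hm Hlt]]|Hno].
  - exact (IH m Hlt Hm).
  - exists n; split; auto. intros m Hm. destruct (Compare_dec.le_lt_dec n m); auto.
    exfalso; apply Hno; eauto.
Qed.

Lemma pigeon {A} (L : list A) : forall h : nat -> A, (forall n, In (h n) L) ->
  exists i j, i < j /\ h i = h j.
Proof.
  induction L as [|a L IH]; intros h Hh.
  - destruct (Hh 0).
  - destruct (classic (exists i, h i = a)) as [[i Hi]|Hno].
    + destruct (classic (exists j, i < j /\ h j = a)) as [[j [Hj Hj']]|Hno2].
      * exists i, j; split; congruence.
      * destruct (IH (fun n => h (S i + n))) as [k [l [Hkl Heq]]].
        { intro n. destruct (Hh (S i + n)) as [E|E]; auto.
          exfalso; apply Hno2; exists (S i + n); split; [lia|auto]. }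
        exists (S i + k), (S i + l); split; [lia|auto].
    + apply IH. intro n. destruct (Hh n) as [E|E]; auto. exfalso; eauto.
Qed.

Definition incr (s : nat -> nat) := forall k, s k < s (S k).
Lemma incr_lt s : incr s -> forall i j, i < j -> s i < s j.
Proof.
  intros Hs i j Hij. induction Hij.
  - apply Hs.
  - specialize (Hs m). lia.
Qed.

Lemma infinite_sub (P : nat -> Prop) : (forall N, exists n, N <= n /\ P n) ->
  exists s, incr s /\ forall k, P (s k).
Proof.
  intros H.
  set (c := fun N => epsilon (inhabits 0) (fun n => N <= n /\ P n)).
  assert (Hc : forall N, N <= c N /\ P (c N)) by (intro N; apply epsilon_spec; auto).
  exists (fix s k := match k with 0 => c 0 | S k' => c (S (s k')) end).
  split.
  - intro k. simpl. destruct (Hc (S ((fix s (k : nat) : nat := match k with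
      | 0 => c 0 | S k' => c (S (s k')) end) k))). lia.
  - intro k; destruct k; simpl; apply Hc.
Qed.

Definition agree {A} (f h : nat -> tree A) n := forall i, i < n -> h i = f i.

Definition minpred {A} (Lab : list A) (f : nat -> tree A) n (f' : nat -> tree A) :=
  adm Lab f' /\ ~ good f' /\ agree f f' n /\
  forall h, adm Lab h -> ~ good h -> agree f h n -> size (f' n) <= size (h n).

Definition step {A} (Lab : list A) (f : nat -> tree A) n : nat -> tree A :=
  epsilon (inhabits f) (minpred Lab f n).

Lemma step_spec {A} (Lab : list A) f n : adm Lab f -> ~ good f -> minpred Lab f n (step Lab f n).
Proof.
  intros Ha Hb. unfold step. apply epsilon_spec.
  destruct (min_nat (fun k => exists h, adm Lab h /\ ~ good h /\ agree f h n /\ size (h n) = k))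
    as [k [[h [H1 [H2 [H3 H4]]]] Hmin]].
  { exists (size (f n)), f. repeat split; auto. }
  exists h. repeat split; auto. intros h' Ha' Hb' Hag'. rewrite H4. apply Hmin. eauto.
Qed.

Fixpoint GG {A} (Lab : list A) (f0 : nat -> tree A) n : nat -> tree A :=
  match n with 0 => step Lab f0 0 | S n' => step Lab (GG Lab f0 n') (S n') end.

Definition prevG {A} (Lab : list A) (f0 : nat -> tree A) n :=
  match n with 0 => f0 | S n' => GG Lab f0 n' end.

Lemma GG_spec {A} (Lab : list A) f0 : adm Lab f0 -> ~ good f0 ->
  forall n, minpred Lab (prevG Lab f0 n) n (GG Lab f0 n).
Proof.
  intros Ha Hb n. induction n as [|n IH].
  - apply step_spec; auto.
  - destruct IH as [H1 [H2 _]]. apply step_spec; auto.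
Qed.

Lemma GG_agree {A} (Lab : list A) f0 : adm Lab f0 -> ~ good f0 ->
  forall n m, n <= m -> forall i, i <= n -> GG Lab f0 m i = GG Lab f0 n i.
Proof.
  intros Ha Hb n m Hnm. induction Hnm; intros i Hi; auto.
  destruct (GG_spec Ha Hb (S m)) as [_ [_ [Hag _]]].
  simpl in Hag. simpl. rewrite Hag by lia. auto.
Qed.

Lemma minimal_bad {A} (Lab : list A) f0 : adm Lab f0 -> ~ good f0 ->
  exists g, adm Lab g /\ ~ good g /\
    forall n h, adm Lab h -> ~ good h -> agree g h n -> size (g n) <= size (h n).
Proof.
  intros Ha Hb. exists (fun n => GG Lab f0 n n).
  assert (HG : forall n i, i <= n -> GG Lab f0 n i = GG Lab f0 i i).
  { intros n i Hi. apply GG_agree; auto. }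
  split; [|split].
  - intro n. destruct (GG_spec Ha Hb n) as [H _]. apply H.
  - intros [i [j [Hij He]]]. destruct (GG_spec Ha Hb j) as [_ [Hbad _]].
    apply Hbad. exists i, j; split; auto. rewrite HG by lia. auto.
  - intros n h Hah Hbh Hag. destruct (GG_spec Ha Hb n) as [_ [_ [_ Hm]]].
    apply Hm; auto. intros i Hi. rewrite Hag by auto. destruct n as [|n]; [lia|].
    simpl. symmetry. apply HG. lia.
Qed.

Definition child {A} (c p : tree A) := exists u, p = Nd c u \/ p = Nd u c.

Lemma child_emb {A} (c p x : tree A) : child c p -> emb x c -> emb x p.
Proof. intros [u [->| ->]] H; [apply e_l|apply e_r]; auto. Qed.
Lemma child_size {A} (c p : tree A) : child c p -> size c < size p.
Proof. intros [u [->| ->]]; simpl; lia. Qed.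
Lemma child_lab {A} Lab (c p : tree A) : child c p -> lab Lab p -> lab Lab c.
Proof. intros [u [->| ->]]; simpl; tauto. Qed.

Lemma asc {A} (c : nat -> tree A) : (forall psi, incr psi -> good (fun k => c (psi k))) ->
  exists s, incr s /\ forall k, emb (c (s k)) (c (s (S k))).
Proof.
  intros Hg.
  destruct (classic (forall N, exists n, N <= n /\ forall j, n < j -> ~ emb (c n) (c j)))
    as [Hinf|Hfin].
  - exfalso. destruct (infinite_sub _ Hinf) as [psi [Hpsi Hp]].
    destruct (Hg psi Hpsi) as [i [j [Hij He]]].
    apply (Hp i (psi j)); auto. apply incr_lt; auto.
  - apply not_all_ex_not in Hfin as [N HN].
    assert (HN' : forall n, N <= n -> exists j, n < j /\ emb (c n) (c j)).
    { intros n Hn. apply NNPP; intro Hno. apply HN. exists n; split; auto.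
      intros j Hj He. apply Hno; eauto. }
    set (nx := fun n => epsilon (inhabits 0) (fun j => n < j /\ emb (c n) (c j))).
    assert (Hnx : forall n, N <= n -> n < nx n /\ emb (c n) (c (nx n)))
      by (intros n Hn; apply epsilon_spec; auto).
    set (s := fix s k := match k with 0 => N | S k' => nx (s k') end).
    assert (Hs : forall k, N <= s k).
    { induction k; simpl; auto. destruct (Hnx _ IHk). lia. }
    exists s; split; intro k; simpl; apply Hnx; auto.
Qed.

Definition getl {A} (t : tree A) : option A := match t with Lf a => Some a | _ => None end.
Definition lft {A} (t : tree A) := match t with Nd a _ => a | _ => t end.
Definition rgt {A} (t : tree A) := match t with Nd _ b => b | _ => t end.

Theorem kruskal {A} (Lab : list A) (f : nat -> tree A) : adm Lab f -> good f.
Proof.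
  intros Ha. apply NNPP; intro Hb.
  destruct (minimal_bad Ha Hb) as [g [Hga [Hgb Hmin]]].
  assert (CG : forall c phi, (forall k, child (c k) (g (phi k))) -> good c).
  { intros c phi Hch. apply NNPP; intro Hcb.
    destruct (min_nat (fun v => exists k, phi k = v)) as [v0 [[k0 Hk0] Hv0]]; [exists (phi 0), 0; reflexivity|].
    set (h := fun i => if Nat.ltb i v0 then g i else c (k0 + (i - v0))).
    assert (Hh : adm Lab h).
    { intro i. unfold h. destruct (Nat.ltb i v0); auto.
      eapply child_lab; [apply Hch|apply Hga]. }
    assert (Hhb : ~ good h).
    { intros [i [j [Hij He]]]. unfold h in He.
      destruct (Nat.ltb i v0) eqn:Ei; destruct (Nat.ltb j v0) eqn:Ej;
        [apply PeanoNat.Nat.ltb_lt in Ei; apply PeanoNat.Nat.ltb_lt in Ej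
        |apply PeanoNat.Nat.ltb_lt in Ei; apply PeanoNat.Nat.ltb_ge in Ej
        |apply PeanoNat.Nat.ltb_ge in Ei; apply PeanoNat.Nat.ltb_lt in Ej; lia
        |apply PeanoNat.Nat.ltb_ge in Ei; apply PeanoNat.Nat.ltb_ge in Ej].
      - apply Hgb; exists i, j; split; auto.
      - apply Hgb. exists i, (phi (k0 + (j - v0))). split.
        + assert (v0 <= phi (k0 + (j - v0))) by (apply Hv0; eauto). lia.
        + eapply child_emb; eauto.
      - apply Hcb. exists (k0 + (i - v0)), (k0 + (j - v0)). split; [lia|auto]. }
    assert (Hag : agree g h v0).
    { intros i Hi. unfold h. apply PeanoNat.Nat.ltb_lt in Hi. rewrite Hi. auto. }
    specialize (Hmin v0 h Hh Hhb Hag).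
    unfold h in Hmin. rewrite PeanoNat.Nat.ltb_irrefl, PeanoNat.Nat.sub_diag, PeanoNat.Nat.add_0_r in Hmin.
    pose proof (child_size (Hch k0)). rewrite Hk0 in H. lia. }
  destruct (classic (exists N, forall n, N <= n -> exists a b, g n = Nd a b)) as [[N HN]|Hno].
  - set (l := fun n => lft (g (N + n))). set (r := fun n => rgt (g (N + n))).
    assert (Hlr : forall n, g (N + n) = Nd (l n) (r n)).
    { intro n. unfold l, r. destruct (HN (N + n)) as [a [b ->]]; auto; lia. }
    destruct (asc l) as [s [Hs Hse]].
    { intros psi Hpsi. apply (CG _ (fun k => N + psi k)). intro k.
      exists (r (psi k)). left. apply Hlr. }
    assert (Hch : forall i j, i < j -> emb (l (s i)) (l (s j))).
    { intros i j Hij. induction Hij; auto. eapply emb_trans; eauto. }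
    destruct (CG (fun k => r (s k)) (fun k => N + s k)) as [i [j [Hij He]]].
    { intro k. exists (l (s k)). right. apply Hlr. }
    apply Hgb. exists (N + s i), (N + s j). split.
    + pose proof (incr_lt Hs Hij). lia.
    + rewrite !Hlr. apply e_nd; auto.
  - assert (Hinf : forall N, exists n, N <= n /\ exists a, g n = Lf a).
    { intro N. apply NNPP; intro H. apply Hno. exists N. intros n Hn.
      destruct (g n) as [a|a b] eqn:E; eauto. exfalso; apply H; eauto. }
    destruct (infinite_sub _ Hinf) as [s [Hs Hp]].
    destruct (pigeon (map Some Lab) (fun k => getl (g (s k)))) as [i [j [Hij Heq]]].
    { intro k. destruct (Hp k) as [a Ea]. simpl. rewrite Ea. simpl.
      apply in_map. specialize (Hga (s k)). rewrite Ea in Hga. exact Hga. }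
    apply Hgb. exists (s i), (s j). split; [apply incr_lt; auto|].
    destruct (Hp i) as [a Ea]; destruct (Hp j) as [b Eb]. simpl in Heq.
    rewrite Ea, Eb in *. simpl in Heq. inversion Heq; subst. apply e_lf.
Qed.

Lemma finite_basis {A} (Lab : list A) (D : tree A -> Prop) : (forall t, D t -> lab Lab t) ->
  exists M, (forall m, In m M -> D m) /\ forall s, D s -> exists m, In m M /\ emb m s.
Proof.
  intros HD. destruct (classic (exists t, D t)) as [[t0 Ht0]|Hno].
  2:{ exists nil. split; [intros m []|]. intros s Hs; exfalso; eauto. }
  apply NNPP; intro H.
  assert (Hst : forall M, (forall m, In m M -> D m) -> exists s, D s /\ forall m, In m M -> ~ emb m s).
  { intros M HM. apply NNPP; intro H2. apply H. exists M. split; auto.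
    intros s Hs. apply NNPP; intro H3. apply H2. exists s. split; auto.
    intros m Hm He. apply H3; eauto. }
  set (pick := fun M => epsilon (inhabits t0) (fun s => D s /\ forall m, In m M -> ~ emb m s)).
  set (Ms := fix Ms n := match n with 0 => nil | S n' => pick (Ms n') :: Ms n' end).
  assert (HMs : forall n, forall m, In m (Ms n) -> D m).
  { induction n as [|n IH]; simpl; [tauto|]. intros m [<-|Hm]; auto.
    eapply proj1. apply (epsilon_spec (inhabits t0) (fun s => D s /\ forall m, In m (Ms n) -> ~ emb m s)).
    apply Hst; auto. }
  assert (Hpick : forall n, D (pick (Ms n)) /\ forall m, In m (Ms n) -> ~ emb m (pick (Ms n))).
  { intro n. apply (epsilon_spec (inhabits t0) (fun s => D s /\ forall m, In m (Ms n) -> ~ emb m s)).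
    apply Hst; apply HMs. }
  assert (Hin : forall i n, i < n -> In (pick (Ms i)) (Ms n)).
  { intros i n Hin. induction Hin; simpl; auto. }
  destruct (@kruskal _ Lab (fun n => pick (Ms n))) as [i [j [Hij He]]].
  { intro n. apply HD, Hpick. }
  apply (proj2 (Hpick j) (pick (Ms i))); auto.
Qed.
Fixpoint ev {A} (mul : A -> A -> A) (t : tree A) : A :=
  match t with Lf a => a | Nd s u => mul (ev mul s) (ev mul u) end.

Fixpoint subs {A} (t : tree A) : list (tree A) :=
  match t with Lf a => [Lf a] | Nd s u => Nd s u :: subs s ++ subs u end.

Lemma subs_refl {A} (t : tree A) : In t (subs t).
Proof. destruct t; simpl; auto. Qed.

Lemma subs_trans {A} (x y z : tree A) : In x (subs y) -> In y (subs z) -> In x (subs z).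
Proof.
  induction z as [a|z1 IH1 z2 IH2]; simpl; intros Hx Hy.
  - destruct Hy as [<-|[]]; simpl in Hx; auto.
  - destruct Hy as [<-|Hy]; [simpl in Hx; auto|].
    right. apply in_app_or in Hy as [Hy|Hy]; apply in_or_app; auto.
Qed.

Inductive tctx (A : Type) : Type :=
| THole : tctx A
| TL : tree A -> tctx A -> tctx A
| TR : tctx A -> tree A -> tctx A.
Arguments THole {A}.
Arguments TL {A} _ _.
Arguments TR {A} _ _.

Fixpoint fill {A} (C : tctx A) (s : tree A) : tree A :=
  match C with THole => s | TL t C' => Nd t (fill C' s) | TR C' t => Nd (fill C' s) t end.

Fixpoint ctx_lab {A} (Lab : list A) (C : tctx A) : Prop :=
  match C with THole => True | TL t C' => lab Lab t /\ ctx_lab Lab C'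
  | TR C' t => ctx_lab Lab C' /\ lab Lab t end.

Lemma lab_fill {A} Lab (C : tctx A) s : ctx_lab Lab C -> lab Lab s -> lab Lab (fill C s).
Proof. induction C; simpl; tauto. Qed.

Lemma emb_fill {A} (C : tctx A) : forall m, exists (c0 : Prop) (L : list (tree A)),
  (forall m', In m' L -> In m' (subs m)) /\
  forall s, emb m (fill C s) <-> c0 \/ exists m', In m' L /\ emb m' s.
Proof.
  induction C as [|t C IH|C IH t]; intro m.
  - exists False, [m]. split.
    + intros m' [<-|[]]. apply subs_refl.
    + intro s; simpl. split; [intro H; right; exists m; auto|].
      intros [[]|[m' [[<-|[]] H]]]; auto.
  - destruct (IH m) as [c1 [L1 [HL1 H1]]].
    destruct m as [a|m1 m2].
    + exists (emb (Lf a) t \/ c1), L1. split; auto.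
      intro s; simpl. rewrite emb_Nd_inv, H1. split.
      * intros [H|[H|[x [y [E _]]]]]; [tauto|tauto|discriminate].
      * intros [[H|H]|H]; tauto.
    + destruct (IH m2) as [c2 [L2 [HL2 H2]]].
      destruct (classic (emb m1 t)) as [Ht|Ht].
      * exists (emb (Nd m1 m2) t \/ c1 \/ c2), (L1 ++ L2). split.
        { intros m' Hm'. apply in_app_or in Hm' as [Hm'|Hm']; auto.
          apply subs_trans with m2; auto. simpl. right. apply in_or_app. right. apply subs_refl. }
        intro s; simpl. rewrite emb_Nd_inv, H1. split.
        { intros [H|[H|[x [y [E [Hx Hy]]]]]]; [tauto| |].
          - destruct H as [H|[m' [Hm' He]]]; [tauto|]. right; exists m'; split; auto.
            apply in_or_app; auto.
          - injection E as <- <-. apply H2 in Hy. destruct Hy as [Hy|[m' [Hm' He]]]; [tauto|].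
            right; exists m'; split; auto. apply in_or_app; auto. }
        { intros [[H|[H|H]]|[m' [Hm' He]]]; [tauto|tauto| |].
          - right; right. exists m1, m2. split; auto. split; auto. apply H2; auto.
          - apply in_app_or in Hm' as [Hm'|Hm'].
            + right; left. right; eauto.
            + right; right. exists m1, m2. split; auto. split; auto. apply H2; right; eauto. }
      * exists (emb (Nd m1 m2) t \/ c1), L1. split; auto.
        intro s; simpl. rewrite emb_Nd_inv, H1. split.
        { intros [H|[H|[x [y [E [Hx Hy]]]]]]; [tauto|tauto|].
          injection E as <- <-. tauto. }
        { intros [[H|H]|H]; tauto. }
  - destruct (IH m) as [c1 [L1 [HL1 H1]]].
    destruct m as [a|m1 m2].
    + exists (emb (Lf a) t \/ c1), L1. split; auto.
      intro s; simpl. rewrite emb_Nd_inv, H1. split.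
      * intros [H|[H|[x [y [E _]]]]]; [tauto|tauto|discriminate].
      * intros [[H|H]|H]; tauto.
    + destruct (IH m1) as [c2 [L2 [HL2 H2]]].
      destruct (classic (emb m2 t)) as [Ht|Ht].
      * exists (emb (Nd m1 m2) t \/ c1 \/ c2), (L1 ++ L2). split.
        { intros m' Hm'. apply in_app_or in Hm' as [Hm'|Hm']; auto.
          apply subs_trans with m1; auto. simpl. right. apply in_or_app. left. apply subs_refl. }
        intro s; simpl. rewrite emb_Nd_inv, H1. split.
        { intros [H|[H|[x [y [E [Hx Hy]]]]]].
          - destruct H as [H|[m' [Hm' He]]]; [tauto|]. right; exists m'; split; auto.
            apply in_or_app; auto.
          - tauto.
          - injection E as <- <-. apply H2 in Hx. destruct Hx as [Hx|[m' [Hm' He]]]; [tauto|].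
            right; exists m'; split; auto. apply in_or_app; auto. }
        { intros [[H|[H|H]]|[m' [Hm' He]]]; [tauto| | |].
          - left. left; auto.
          - right; right. exists m1, m2. split; auto. split; auto. apply H2; auto.
          - apply in_app_or in Hm' as [Hm'|Hm'].
            + left. right; eauto.
            + right; right. exists m1, m2. split; auto. split; auto. apply H2; right; eauto. }
      * exists (emb (Nd m1 m2) t \/ c1), L1. split; auto.
        intro s; simpl. rewrite emb_Nd_inv, H1. split.
        { intros [H|[H|[x [y [E [Hx Hy]]]]]]; [tauto|tauto|].
          injection E as <- <-. tauto. }
        { intros [[H|H]|H]; tauto. }
Qed.


Lemma rle_refl {A} (meet join mul ldiv rdiv : A -> A -> A) one bang
  (HA : is_interior_rlu_groupoid meet join mul ldiv rdiv one bang) x : rle meet x x.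
Proof.
  unfold rle. pose proof (absorb_mj HA x (meet x x)) as E.
  rewrite (absorb_jm HA x x) in E. exact E.
Qed.

Lemma rle_trans {A} (meet join mul ldiv rdiv : A -> A -> A) one bang
  (HA : is_interior_rlu_groupoid meet join mul ldiv rdiv one bang) x y z :
  rle meet x y -> rle meet y z -> rle meet x z.
Proof.
  unfold rle. intros H1 H2. rewrite <- H1 at 1. rewrite <- (meet_assoc HA).
  rewrite H2. exact H1.
Qed.

Lemma mul_mono_l {A} (meet join mul ldiv rdiv : A -> A -> A) one bang
  (HA : is_interior_rlu_groupoid meet join mul ldiv rdiv one bang) x y z :
  rle meet x y -> rle meet (mul x z) (mul y z).
Proof.
  intros H. apply (resid_rdiv HA). eapply (rle_trans HA); [exact H|].
  apply (resid_rdiv HA). apply (rle_refl HA).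
Qed.

Lemma mul_mono_r {A} (meet join mul ldiv rdiv : A -> A -> A) one bang
  (HA : is_interior_rlu_groupoid meet join mul ldiv rdiv one bang) x y z :
  rle meet x y -> rle meet (mul z x) (mul z y).
Proof.
  intros H. apply (resid_ldiv HA). eapply (rle_trans HA); [exact H|].
  apply (resid_ldiv HA). apply (rle_refl HA).
Qed.

Lemma emb_ev {A} (meet join mul ldiv rdiv : A -> A -> A) one bang
  (HA : is_interior_rlu_groupoid meet join mul ldiv rdiv one bang)
  (Hint : integral meet one) (s t : tree A) :
  emb s t -> rle meet (ev mul t) (ev mul s).
Proof.
  induction 1; simpl.
  - apply (rle_refl HA).
  - eapply (rle_trans HA); [|exact IHemb].
    rewrite <- (mul_one_r HA (ev mul t1)) at 2. apply (mul_mono_r HA). apply Hint.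
  - eapply (rle_trans HA); [|exact IHemb].
    rewrite <- (mul_one_l HA (ev mul t2)) at 2. apply (mul_mono_l HA). apply Hint.
  - eapply (rle_trans HA). apply (mul_mono_l HA); exact IHemb1.
    apply (mul_mono_r HA); exact IHemb2.
Qed.

Fixpoint pow {X} (l : list X) : list (list X) :=
  match l with nil => [nil] | a :: l' => map (cons a) (pow l') ++ pow l' end.

Lemma pow_sel {X} (l : list X) (P : X -> Prop) :
  exists l', In l' (pow l) /\ forall x, In x l' <-> In x l /\ P x.
Proof.
  induction l as [|a l [l' [Hin Hl']]]; simpl.
  - exists nil; split; auto. intros x; simpl; tauto.
  - destruct (classic (P a)) as [Ha|Ha].
    + exists (a :: l'). split.
      * apply in_or_app; left. apply in_map. auto.
      * intro x. simpl. rewrite Hl'. split.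
        -- intros [<-|H]; tauto.
        -- intros [[<-|H] HP]; tauto.
    + exists l'. split.
      * apply in_or_app; right; auto.
      * intro x. rewrite Hl'. split; [tauto|].
        intros [[<-|H] HP]; tauto.
Qed.

Lemma GB_tree {A} (mul : A -> A -> A) one (B : A -> Prop) lB :
  (forall x, B x <-> In x lB) ->
  forall x, G_B mul one B x -> exists s, lab (one :: lB) s /\ ev mul s = x.
Proof.
  intros HB x H. induction H as [b Hb| |x y _ [s1 [L1 E1]] _ [s2 [L2 E2]]].
  - exists (Lf b). simpl. split; auto. right. apply HB; auto.
  - exists (Lf one). simpl. auto.
  - exists (Nd s1 s2). simpl. split; auto. congruence.
Qed.

Lemma tree_GB {A} (mul : A -> A -> A) one (B : A -> Prop) lB :
  (forall x, B x <-> In x lB) ->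
  forall s, lab (one :: lB) s -> G_B mul one B (ev mul s).
Proof.
  intros HB s. induction s as [a|s1 IH1 s2 IH2]; simpl.
  - intros [<-|H]; [apply gsg_one|apply gsg_base; apply HB; auto].
  - intros [H1 H2]. apply gsg_mul; [apply IH1|apply IH2]; auto.
Qed.

Lemma lp_ctx {A} (mul : A -> A -> A) one (B : A -> Prop) lB :
  (forall x, B x <-> In x lB) ->
  forall p, lp_over (G_B mul one B) p -> exists C, ctx_lab (one :: lB) C /\
    forall s, ev mul (fill C s) = lp_eval mul p (ev mul s).
Proof.
  intros HB p. induction p as [|c p IH|p IH c]; simpl.
  - intros _. exists THole. simpl; auto.
  - intros [Hc Hp]. destruct (IH Hp) as [C [HC EC]].
    destruct (@GB_tree _ mul one B lB HB c Hc) as [t [Ht Et]].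
    exists (TL t C). simpl. split; auto. intro s. rewrite EC, Et; auto.
  - intros [Hp Hc]. destruct (IH Hp) as [C [HC EC]].
    destruct (@GB_tree _ mul one B lB HB c Hc) as [t [Ht Et]].
    exists (TR C t). simpl. split; auto. intro s. rewrite EC, Et; auto.
Qed.

Lemma combine {A} (M : list (tree A)) (C : tctx A) : exists (c0 : Prop) L,
  (forall m', In m' L -> exists m, In m M /\ In m' (subs m)) /\
  forall s, (exists m, In m M /\ emb m (fill C s)) <-> c0 \/ exists m', In m' L /\ emb m' s.
Proof.
  induction M as [|m M [c1 [L1 [HL1 H1]]]].
  - exists False, nil. split; [intros m' []|]. intro s. split.
    + intros [m [[] _]].
    + intros [[]|[m' [[] _]]].
  - destruct (emb_fill C m) as [c2 [L2 [HL2 H2]]].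
    exists (c2 \/ c1), (L2 ++ L1). split.
    + intros m' Hm'. apply in_app_or in Hm' as [Hm'|Hm'].
      * exists m; simpl; auto.
      * destruct (HL1 _ Hm') as [m0 [Hm0 Hs]]. exists m0; simpl; auto.
    + intro s. split.
      * intros [m0 [[<-|Hm0] He]].
        -- apply H2 in He as [He|[m' [Hm' He]]]; [tauto|].
           right. exists m'. split; auto. apply in_or_app; auto.
        -- destruct (proj1 (H1 s) (ex_intro _ m0 (conj Hm0 He))) as [Hc|[m' [Hm' He']]];
             [tauto|]. right. exists m'. split; auto. apply in_or_app; auto.
      * intros [[Hc|Hc]|[m' [Hm' He]]].
        -- exists m. split; [simpl; auto|]. apply H2; auto.
        -- destruct (proj2 (H1 s) (or_introl Hc)) as [m0 [Hm0 He]]. exists m0; simpl; auto.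
        -- apply in_app_or in Hm' as [Hm'|Hm'].
           ++ exists m. split; [simpl; auto|]. apply H2. right; eauto.
           ++ destruct (proj2 (H1 s) (or_intror (ex_intro _ m' (conj Hm' He)))) as [m0 [Hm0 He0]].
              exists m0; simpl; auto.
Qed.

Lemma allsub {A} (meet mul : A -> A -> A) (Lab : list A) (l0 : list A) :
  exists AS : list (tree A), forall b, In b l0 -> exists M,
    (forall m, In m M -> lab Lab m /\ rle meet (ev mul m) b) /\
    (forall s, lab Lab s /\ rle meet (ev mul s) b -> exists m, In m M /\ emb m s) /\
    (forall m, In m M -> forall m', In m' (subs m) -> In m' AS).
Proof.
  induction l0 as [|b l0 [AS HAS]].
  - exists nil. intros b [].
  - destruct (@finite_basis _ Lab (fun s => lab Lab s /\ rle meet (ev mul s) b)) as [M [HM1 HM2]].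
    { intros t [H _]; exact H. }
    exists (flat_map subs M ++ AS). intros b' [<-|Hb'].
    + exists M. split; auto. split; auto. intros m Hm m' Hm'. apply in_or_app; left.
      apply in_flat_map. eauto.
    + destruct (HAS b' Hb') as [M' [H1 [H2 H3]]]. exists M'. split; auto. split; auto.
      intros m Hm m' Hm'. apply in_or_app; right. eauto.
Qed.

Theorem mainTheorem6 (A : Type) (meet join mul ldiv rdiv : A -> A -> A) (one : A)
  (bang : A -> A)
  (HA : is_interior_rlu_groupoid meet join mul ldiv rdiv one bang)
  (Hint : integral meet one)
  (B : A -> Prop) (HB : finite_set B) :
  FplusAB_finite meet mul one B.
Proof.
  destruct HB as [lB HlB].
  set (Lab := one :: lB).
  destruct (allsub meet mul Lab lB) as [AS HAS].
  set (Cands := G_B mul one B :: map (fun L x => G_B mul one B x /\ exists s, lab Lab s /\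
      ev mul s = x /\ exists m', In m' L /\ emb m' s) (pow AS)).
  assert (Hbasic : forall t, T_B mul one B t -> exists Y, In Y Cands /\
      forall x, (G_B mul one B x /\ N_B meet mul x t) <-> Y x).
  { intros [u b] [Hu Hb]. simpl in Hu, Hb. unfold N_B. simpl.
    destruct (@lp_ctx _ mul one B lB HlB u Hu) as [C [HC EC]].
    destruct (HAS b (proj1 (HlB b) Hb)) as [M [HM1 [HM2 HM3]]].
    destruct (combine M C) as [c0 [L [HL HLe]]].
    assert (Key : forall s, lab Lab s ->
      (rle meet (lp_eval mul u (ev mul s)) b <-> c0 \/ exists m', In m' L /\ emb m' s)).
    { intros s Hs. rewrite <- HLe. rewrite <- EC. split.
      - intro H. apply HM2. split; auto. apply lab_fill; auto.
      - intros [m [Hm He]]. eapply (rle_trans HA). apply (emb_ev HA Hint He).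
        apply HM1; auto. }
    destruct (classic c0) as [Hc0|Hc0].
    - exists (G_B mul one B). split; [left; auto|]. intro x. split; [tauto|].
      intro Hx. split; auto. destruct (@GB_tree _ mul one B lB HlB x Hx) as [s [Hs <-]].
      apply Key; auto.
    - destruct (pow_sel AS (fun m' => In m' L)) as [L' [HL' HL'e]].
      exists (fun x => G_B mul one B x /\ exists s, lab Lab s /\
        ev mul s = x /\ exists m', In m' L' /\ emb m' s). split.
      + right. apply in_map_iff. exists L'. auto.
      + intro x. split.
        * intros [Hx Hle]. split; auto.
          destruct (@GB_tree _ mul one B lB HlB x Hx) as [s [Hs <-]].
          exists s. split; auto. split; auto.
          apply Key in Hle; auto. destruct Hle as [Hle|[m' [Hm' He]]]; [tauto|].
          exists m'. split; auto. apply HL'e. split; auto.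
          destruct (HL _ Hm') as [m [Hm Hsub]]. eapply HM3; eauto.
        * intros [Hx [s [Hs [<- [m' [Hm' He]]]]]]. split; auto.
          apply Key; auto. right. exists m'. split; auto. apply HL'e; auto. }
  exists (map (fun Ls x => G_B mul one B x /\ forall Y, In Y Ls -> Y x) (pow Cands)).
  intros X [HXG HXc].
  destruct (pow_sel Cands (fun Y => forall x, X x -> Y x)) as [Ls [HLs HLse]].
  exists (fun x => G_B mul one B x /\ forall Y, In Y Ls -> Y x). split.
  - apply in_map_iff. exists Ls. auto.
  - intro x. split.
    + intro Hx. split; auto. intros Y HY. apply HLse in HY. apply HY; auto.
    + intros [Hx HY]. apply HXc. split; auto.
      intros t [Ht HtX]. destruct (Hbasic t Ht) as [Y [HYc HYe]].
      assert (HYin : In Y Ls).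
      { apply HLse. split; auto. intros z Hz. apply HYe. split; auto. }
      apply HYe. apply HY; auto.
Qed.
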